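(* Consider a discrete-time control system $\mathbf{x}_{k+1}=f(\mathbf{x}_k,\mathbf{u}_k)$ with state $\mathbf{x}_k\in\mathcal{X}\subset\mathbb{R}^n$, control $\mathbf{u}_k\in\mathcal{U}\subset\mathbb{R}^m$, and $f$ locally Lipschitz. Let $h:\mathcal{X}\times\mathcal{O}\to\mathbb{R}$ be a continuous function of the robot state and the obstacle state, let $h_k:=h(\mathbf{x}_k,\hat{\mathbf{x}}^o_k)$ where $\hat{\mathbf{x}}^o_k$ is the (deterministic) estimated obstacle state at time $k$, and let $h_{k+1}:=h(\mathbf{x}_{k+1},\mathbf{x}^o_{k+1})$, which is a random variable because the next obstacle state $\mathbf{x}^o_{k+1}$ is random. Let $\mathcal{S}=\{\mathbf{x}_k\in\mathcal{X}: h(\mathbf{x}_k,\hat{\mathbf{x}}^o_k)\ge 0\}$. Fix $\beta_u\in(0,1)$ and $\gamma\in(0,1]$. For $\beta\in(0,1)$ let $\mathcal{U}^k_\beta=\{\mathbf{u}_k\in\mathcal{U}:\operatorname{CVaR}^k_\beta(h_{k+1})\ge(1-\gamma)h_k\}$, and define the adaptive risk level $\beta_k:=\min\{\beta\in(0,\beta_u]:\mathcal{U}^k_\beta\neq\emptyset\}$. Suppose $h$ is a risk adaptive CVaR barrier function, i.e., for each $\mathbf{x}_k\in\mathbb{R}^n$ there exists $\mathbf{u}_k\in\mathbb{R}^m$ such that $\operatorname{CVaR}^k_{\beta_k}(h_{k+1})\ge(1-\gamma)h_k$. Then $\mathcal{S}$ is at least CVaR-safe with respect to the risk level $\beta_u$,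 i.e., the solutions of the system starting at $\mathbf{x}_0\in\mathcal{S}$ satisfy $\operatorname{CVaR}^{0:k}_{\beta_u}(h_k)\ge 0$ for all $k\ge 0$.
   Context: For a real random variable $Z$ and $\beta\in(0,1)$: $\operatorname{VaR}_\beta(Z)=\sup\{\zeta\in\mathbb{R}:\mathbb{P}(Z\ge\zeta)\ge 1-\beta\}$ and $\operatorname{CVaR}_\beta(Z)=\mathbb{E}[Z\mid Z\le \operatorname{VaR}_\beta(Z)]$, equivalently $\operatorname{CVaR}_\beta(Z)=-\inf_{\zeta\in\mathbb{R}}\mathbb{E}[\zeta+(-Z-\zeta)_+/\beta]$ with $(\cdot)_+=\max\{\cdot,0\}$. $\operatorname{CVaR}^k_\beta$ denotes this CVaR operator applied at time step $k$ (conditional on the information at time $k$), and the cumulative (dynamic) risk measure is the composition $\operatorname{CVaR}^{0:k}_\beta:=\operatorname{CVaR}^0_\beta\circ\operatorname{CVaR}^1_\beta\circ\cdots\circ\operatorname{CVaR}^k_\beta$. The solutions of the system starting at $\mathbf{x}_0\in\mathcal{S}$ are called CVaR-safe (at risk level $\beta$) if $\operatorname{CVaR}^{0:k}_\beta(h_k)\ge 0$ for all $k\ge0$. *)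

(* Defs.v *)
From HB Require Import structures.
From mathcomp Require Import all_boot all_order all_algebra.
From mathcomp Require Import all_classical all_reals all_analysis.
Set Implicit Arguments. Unset Strict Implicit. Unset Printing Implicit Defensive.
Import Order.TTheory GRing.Theory Num.Theory numFieldNormedType.Exports.
Local Open Scope classical_set_scope.
Local Open Scope ring_scope.

(* Model: the randomness is an i.i.d. noise sequence
   w_1, w_2, ... drawn from the probability P on Omega; the information at
   time k is the history of the first k noise values, stored newest first
   as a list [w_k; ...; w_1].  Every quantity at time k is a function of
   such a history. *)

Section CVaR.
Context {R : realType} {d : measure_display} {Omega : measurableType d}.
Variable P : probability Omega R.

Definition CVaR (beta : R) (Z : Omega -> \bar R) : \bar R :=
  (- ereal_inf [set (z%:E + (beta^-1)%:E * \int[P]_w maxe (- Z w - z%:E) 0%E)%E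
               | z in [set: R]])%E.

(* CVaR^k: the CVaR at time k, conditional on the history s of length k;
   it acts on a quantity V defined on histories of length k+1. *)
Definition cvar_step (beta : R) (V : seq Omega -> \bar R) : seq Omega -> \bar R :=
  fun s => CVaR beta (fun w => V (w :: s)).

(* CVaR^{0:k}_beta(Z_k) = CVaR^0 o CVaR^1 o ... o CVaR^k (Z_k), where Z_k is a
   quantity known at time k (a function of histories of length k), regarded
   as a random variable on the (k+1)-step space (constant in w_{k+1}). *)
Definition dyn_CVaR (beta : R) (k : nat) (Z : seq Omega -> R) : \bar R :=
  iter k.+1 (cvar_step beta) (fun s => (Z (behead s))%:E) [::].
End CVaR.

Section System.
Context {R : realType} {Omega : Type} {n m : nat}.

Fixpoint traj (f : 'rV[R]_n -> 'rV[R]_m -> 'rV[R]_n) (pol : seq Omega -> 'rV[R]_m)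
  (x0 : 'rV[R]_n) (s : seq Omega) : 'rV[R]_n :=
  match s with
  | [::] => x0
  | _ :: s' => f (traj f pol x0 s') (pol s')
  end.
End System.

Definition locally_lipschitz {R : realType} {n m : nat}
  (D : set ('rV[R]_n * 'rV[R]_m)) (f : 'rV[R]_n -> 'rV[R]_m -> 'rV[R]_n) : Prop :=
  forall z, D z -> exists r L : R, 0 < r /\
    forall z1 z2, D z1 -> D z2 ->
      `|z1.1 - z.1| < r -> `|z1.2 - z.2| < r ->
      `|z2.1 - z.1| < r -> `|z2.2 - z.2| < r ->
      `|f z1.1 z1.2 - f z2.1 z2.2| <= L * (`|z1.1 - z2.1| + `|z1.2 - z2.2|).

Section Adaptive.
Context {R : realType} {d : measure_display} {Omega : measurableType d}
  {n m p : nat}.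
Variables (P : probability Omega R) (Ucal : set 'rV[R]_m)
  (f : 'rV[R]_n -> 'rV[R]_m -> 'rV[R]_n) (h : 'rV[R]_n -> 'rV[R]_p -> R)
  (obs : seq Omega -> 'rV[R]_p) (gamma : R).

Definition h_next (x : 'rV[R]_n) (u : 'rV[R]_m) (s : seq Omega) : Omega -> \bar R :=
  fun w => (h (f x u) (obs (w :: s)))%:E.

Definition U_beta (beta : R) (x : 'rV[R]_n) (s : seq Omega) : set 'rV[R]_m :=
  [set u | Ucal u /\ (((1 - gamma) * h x (obs s))%:E <= CVaR P beta (h_next x u s))%E].

Definition is_adaptive_level (beta_u b : R) (x : 'rV[R]_n) (s : seq Omega) : Prop :=
  [/\ 0 < b <= beta_u, U_beta b x s !=set0 &
      forall beta, 0 < beta <= beta_u -> U_beta beta x s !=set0 -> b <= beta].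
End Adaptive.

(* Main.v *)
Require Import Defs.
From HB Require Import structures.
From mathcomp Require Import all_boot all_order all_algebra.
From mathcomp Require Import all_classical all_reals all_analysis.
Import Order.TTheory GRing.Theory Num.Theory numFieldNormedType.Exports.
Local Open Scope classical_set_scope.
Local Open Scope ring_scope.

Section Helpers.
Context {R : realType} {d : measure_display} {Omega : measurableType d}.
Variable P : probability Omega R.
Local Open Scope ereal_scope.

Lemma int_mono (f g : Omega -> \bar R) : (forall w, 0 <= f w) ->
  (forall w, f w <= g w) -> \int[P]_w f w <= \int[P]_w g w.
Proof.
move=> f0 fg.
rewrite !ge0_integralTE //; last by move=> w; exact: le_trans (f0 w) (fg w).
apply: ereal_sup_le => _ [h hf <-]; exists h => // x; exact: le_trans (hf x) (fg x).
Qed.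

Lemma CVaR_mono beta (Z1 Z2 : Omega -> \bar R) : (0 <= beta)%R ->
  (forall w, Z1 w <= Z2 w) -> CVaR P beta Z1 <= CVaR P beta Z2.
Proof.
move=> b0 Z12; rewrite /CVaR leeNl oppeK.
apply: le_ereal_inf_tmp => _ [z _ <-]; apply: ge_ereal_inf.
eexists; first by exists z.
rewrite leeD2l // lee_wpmul2l ?lee_fin ?invr_ge0 //.
apply: int_mono => w.
  by rewrite (@le_max _ (\bar R)) lexx orbT.
rewrite (@ge_max _ (\bar R)) !(@le_max _ (\bar R)) lexx !orbT andbT.
apply/orP; left; rewrite leeD2r // leeN2 //.
Qed.

Lemma maxe0E (a : R) : maxe a%:E 0 = (Num.max a 0)%:E.
Proof. by rewrite EFin_max. Qed.

Lemma CVaR_beta_mono b bu Z : (0 < b)%R -> (b <= bu)%R ->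
  CVaR P b Z <= CVaR P bu Z.
Proof.
move=> b0 bbu; rewrite /CVaR leeNl oppeK.
apply: le_ereal_inf_tmp => _ [z _ <-]; apply: ge_ereal_inf.
eexists; first by exists z.
rewrite leeD2l //; apply: lee_wpmul2r.
  by apply: integral_ge0 => w _; rewrite (@le_max _ (\bar R)) lexx orbT.
rewrite lee_fin lef_pV2 ?posrE //; exact: lt_le_trans bbu.
Qed.

Lemma CVaR_cst_ge beta r : r%:E <= CVaR P beta (fun _ => r%:E).
Proof.
rewrite /CVaR leeNr; apply: ge_ereal_inf.
exists ((-r)%:E + beta^-1%:E * \int[P]_w maxe (- r%:E - (-r)%:E) 0); first by exists (-r)%R.
rewrite integral0_eq ?mule0 ?adde0 // => w _.
by rewrite -EFinN -EFinB subrr maxe0E maxxx.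
Qed.

Lemma CVaR_scale beta c (Y : Omega -> R) : (0 <= c)%R -> measurable_fun setT Y ->
  c%:E * CVaR P beta (fun w => (Y w)%:E) <= CVaR P beta (fun w => (c * Y w)%:E).
Proof.
move=> c0 mY; have [->|cn0] := eqVneq c 0%R.
  rewrite mul0e; have -> : (fun w => (0 * Y w)%:E) = fun _ => 0%R%:E.
    by apply/funext => w; rewrite mul0r.
  exact: (CVaR_cst_ge beta 0).
have cpos : (0 < c)%R by rewrite lt_neqAle eq_sym cn0 c0.
rewrite /CVaR muleN -ereal_inf_pZl // leeN2.
apply: ereal_inf_le_tmp => _ [_ [z _ <-] <-]; exists (c * z)%R => //.
have Hi : \int[P]_w maxe (- (c * Y w)%:E - (c * z)%:E) 0 =
    c%:E * \int[P]_w maxe (- (Y w)%:E - z%:E) 0.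
  have -> : (fun w => maxe (- (Y w)%:E - z%:E) 0) = (fun w => (Num.max (- Y w - z) 0)%R%:E).
    by apply/funext => w; rewrite -EFinN -EFinB maxe0E.
  rewrite -ge0_integralZl_EFin //; last 2 first.
  - by move=> w _; rewrite lee_fin le_max lexx orbT.
  - apply/measurable_realfun.measurable_EFinP; apply: measurable_realfun.measurable_maxr => //.
    apply: measurable_realfun.measurable_funB => //.
    exact: measurable_realfun.measurable_funN.
  apply: eq_integral => w _.
  by rewrite -EFinN -EFinB maxe0E -EFinM maxr_pMr ?ltW // mulr0 mulrBr mulrN.
rewrite Hi [in RHS]muleDr // EFinM; congr (_ + _).
by rewrite !muleA (muleC (beta^-1)%:E).
Qed.
End Helpers.

Theorem theorem2 (R : realType) (d : measure_display) (Omega : measurableType d)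
  (P : probability Omega R) (n m p : nat)
  (Xcal : set 'rV[R]_n) (Ucal : set 'rV[R]_m) (Ocal : set 'rV[R]_p)
  (f : 'rV[R]_n -> 'rV[R]_m -> 'rV[R]_n) (h : 'rV[R]_n -> 'rV[R]_p -> R)
  (obs : seq Omega -> 'rV[R]_p) (beta_u gamma : R) :
  (* f : X x U -> X, locally Lipschitz *)
  (forall x u, Xcal x -> Ucal u -> Xcal (f x u)) ->
  locally_lipschitz (Xcal `*` Ucal) f ->
  (* h : X x O -> R continuous *)
  {within Xcal `*` Ocal, continuous (fun z : 'rV[R]_n * 'rV[R]_p => h z.1 z.2)} ->
  (* obstacle states lie in O; h_{k+1} is a random variable *)
  (forall s, Ocal (obs s)) ->
  (forall x s, Xcal x -> measurable_fun [set: Omega] (fun w => h x (obs (w :: s)))) ->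
  0 < beta_u < 1 -> 0 < gamma <= 1 ->
  (* h is a risk adaptive CVaR barrier function *)
  (forall (x : 'rV[R]_n) (s : seq Omega), exists b,
      is_adaptive_level P Ucal f h obs gamma beta_u b x s /\
      exists u : 'rV[R]_m,
        (((1 - gamma) * h x (obs s))%:E <= CVaR P b (h_next f h obs x u s))%E) ->
  (* every solution starting in S under controls u_k in U^k_{beta_k} *)
  forall (x0 : 'rV[R]_n) (pol : seq Omega -> 'rV[R]_m),
    Xcal x0 -> 0 <= h x0 (obs [::]) ->
    (forall s, exists b,
        is_adaptive_level P Ucal f h obs gamma beta_u b (traj f pol x0 s) s /\
        U_beta P Ucal f h obs gamma b (traj f pol x0 s) s (pol s)) ->
    forall k : nat,
      (0%:E <= dyn_CVaR P beta_u k (fun s => h (traj f pol x0 s) (obs s)))%E.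
Proof.
move=> fX _ _ _ hmeas /andP[bu0 bu1] /andP[g0 g1] _ x0 pol Xx0 H0 hpol k.
set H := fun s => h (traj f pol x0 s) (obs s).
have Xtraj : forall s, Xcal (traj f pol x0 s).
  elim=> [|w s IH] //=; apply: fX => //.
  by have [b [_ [Ub _]]] := hpol s.
have key : forall j s, (((1 - gamma) ^+ j * H s)%:E <=
    iter j.+1 (cvar_step P beta_u) (fun s => (H (behead s))%:E) s)%E.
  elim=> [|j IH] s.
    by rewrite expr0 mul1r /=; exact: CVaR_cst_ge.
  rewrite [iter _ _ _]/= /cvar_step.
  apply: (@le_trans _ _ (CVaR P beta_u (fun w => ((1 - gamma) ^+ j * H (w :: s))%:E))); last first.
    apply: CVaR_mono; first exact: ltW.
    by move=> w; exact: IH.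
  have [b [[/andP[b0 bbu] _ _] [Ub Hb]]] := hpol s.
  have c0 : (0 <= (1 - gamma) ^+ j)%R by apply: exprn_ge0; rewrite subr_ge0.
  apply: le_trans; last first.
    apply: CVaR_scale => //.
    exact: (hmeas _ s (fX _ _ (Xtraj s) Ub)).
  rewrite exprSr -mulrA EFinM.
  apply: lee_wpmul2l; first by rewrite lee_fin.
  apply: (le_trans Hb).
  exact: CVaR_beta_mono.
apply: le_trans (key k [::]).
rewrite lee_fin; apply: mulr_ge0 => //.
by apply: exprn_ge0; rewrite subr_ge0.
Qed.
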